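(* Let $v$ be a vertex of a graph $\Gamma$ with incident edges $e_1,\dots,e_K$, and for each $i$ let $X_i$ be a nonsingular vector field defined on a neighborhood of the endpoint of $e_i$ at $v$, this neighborhood being identified with $[0,1)$ with $0$ corresponding to $v$. Suppose that (1) each $X_i$ generates a well-defined local semiflow on $(0,1)$; (2) the magnitudes $\|X_i(0)\|$ of the endpoint vectors (taken with respect to the attaching homeomorphisms) are all identical; and (3) among the signs of the endpoint vectors $X_i(0)$ (positive if pointing into $[0,\epsilon)$, negative if pointing out of it) there is exactly one positive sign. Then $\{X_i\}$ generates a well-defined semiflow on the union of these edge neighborhoods in $\Gamma$, i.e., every point has a unique forward orbit.
   Context: A graph consists of finitely many vertices and edges, each edge homeomorphic to $[0,1]$ and attached to vertices along its endpoints, with the quotient topology. A semiflow is a continuous-time dynamical system in which every point has a uniquely defined forward orbit (backward orbits need not be unique). *)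

(* Defs.v *)
From Stdlib Require Import Reals Lra Arith.
Open Scope R_scope.

Definition cont_on_time {A : Type} (dist : A -> A -> R)
  (g : R -> A) (T : R) : Prop :=
  forall t, 0 <= t < T -> forall eps, eps > 0 ->
    exists delta, delta > 0 /\
      forall s, 0 <= s < T -> Rabs (s - t) < delta -> dist (g s) (g t) < eps.

Definition right_deriv (f : R -> R) (t T L : R) : Prop :=
  forall eps, eps > 0 -> exists delta, delta > 0 /\
    forall s, t < s -> s < t + delta -> s < T ->
      Rabs ((f s - f t) / (s - t) - L) < eps.

Definition vf_continuous (X : R -> R) : Prop :=
  forall x, 0 <= x < 1 -> forall eps, eps > 0 -> exists delta, delta > 0 /\
    forall y, 0 <= y < 1 -> Rabs (y - x) < delta -> Rabs (X y - X x) < eps.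

Definition nonsingular (X : R -> R) : Prop := forall x, 0 <= x < 1 -> X x <> 0.

Definition open_edge_solution (X : R -> R) (x : R -> R) (T : R) : Prop :=
  T > 0 /\
  (forall t, 0 <= t < T -> 0 < x t < 1) /\
  cont_on_time (fun a b => Rabs (a - b)) x T /\
  (forall t, 0 <= t < T -> right_deriv x t T (X (x t))).

Definition local_semiflow_open (X : R -> R) : Prop :=
  (forall x0, 0 < x0 < 1 -> exists x T, open_edge_solution X x T /\ x 0 = x0) /\
  (forall x1 T1 x2 T2, open_edge_solution X x1 T1 -> open_edge_solution X x2 T2 ->
     x1 0 = x2 0 -> forall t, 0 <= t -> t < T1 -> t < T2 -> x1 t = x2 t).

(* A point is (i, x) with i < K and 0 <= x < 1 : coordinate x on edge i,
   x = 0 being the vertex v.  All (i,0) are identified (quotient topology). *)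
Definition star_point (K : nat) (p : nat * R) : Prop :=
  (fst p < K)%nat /\ 0 <= snd p < 1.

Definition star_eq (p q : nat * R) : Prop :=
  p = q \/ (snd p = 0 /\ snd q = 0).

(* path metric of the star (induces the quotient topology) *)
Definition star_dist (p q : nat * R) : R :=
  if Nat.eqb (fst p) (fst q) then Rabs (snd p - snd q) else snd p + snd q.

Definition on_edge (i : nat) (p : nat * R) : Prop := fst p = i \/ snd p = 0.

(* the coordinate of p along edge i (meaningful when on_edge i p) *)
Definition coord (i : nat) (p : nat * R) : R :=
  if Nat.eqb (fst p) i then snd p else 0.

Definition star_solution (K : nat) (X : nat -> R -> R) (g : R -> nat * R) (T : R)
  : Prop :=
  T > 0 /\
  (forall t, 0 <= t < T -> star_point K (g t)) /\
  cont_on_time star_dist g T /\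
  (forall t, 0 <= t < T -> exists i, (i < K)%nat /\
     (exists delta, delta > 0 /\
        forall s, t <= s -> s < t + delta -> s < T -> on_edge i (g s)) /\
     right_deriv (fun s => coord i (g s)) t T (X i (coord i (g t)))).

Definition star_semiflow (K : nat) (X : nat -> R -> R) : Prop :=
  (forall p, star_point K p ->
     exists g T, star_solution K X g T /\ star_eq (g 0) p) /\
  (forall g1 T1 g2 T2, star_solution K X g1 T1 -> star_solution K X g2 T2 ->
     star_eq (g1 0) (g2 0) ->
     forall t, 0 <= t -> t < T1 -> t < T2 -> star_eq (g1 t) (g2 t)).

(* Main.v *)
Require Import Defs.
From Stdlib Require Import Reals Lra Lia Classical ClassicalEpsilon.
From Coquelicot Require Import Coquelicot.
Open Scope R_scope.

Definition Xc (Y : R -> R) (u : R) := Y (Rmax 0 u).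
Definition Fint (Y : R -> R) (x : R) := RInt (fun u => / Xc Y u) 0 x.

Lemma Rmax_lip u z : Rabs (Rmax 0 u - Rmax 0 z) <= Rabs (u - z).
Proof.
  unfold Rmax; destruct (Rle_dec 0 u); destruct (Rle_dec 0 z);
  unfold Rabs; repeat destruct Rcase_abs; lra.
Qed.

Lemma Xc_cont Y : vf_continuous Y -> forall z, -1 < z < 1 -> continuity_pt (Xc Y) z.
Proof.
  intros Hc z Hz.
  unfold continuity_pt, continue_in, limit1_in, limit_in; simpl; unfold R_dist.
  intros eps Heps.
  assert (H0 : 0 <= Rmax 0 z < 1) by (unfold Rmax; destruct Rle_dec; lra).
  destruct (Hc _ H0 eps Heps) as [d [Hd Hd']].
  exists (Rmin d (1 - z)); split.
  { apply Rmin_pos; lra. }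
  intros x [_ Hx]. unfold Xc.
  assert (Hm1 := Rmin_l d (1 - z)). assert (Hm2 := Rmin_r d (1 - z)).
  apply Hd'.
  - assert (x < 1) by (unfold Rabs in Hx; destruct Rcase_abs in Hx; lra).
    unfold Rmax; destruct Rle_dec; lra.
  - eapply Rle_lt_trans; [apply Rmax_lip|lra].
Qed.

Lemma Xc_nz Y : nonsingular Y -> forall z, z < 1 -> Xc Y z <> 0.
Proof.
  intros Hn z Hz. unfold Xc. apply Hn. unfold Rmax; destruct Rle_dec; lra.
Qed.

Lemma Fint_deriv Y : vf_continuous Y -> nonsingular Y ->
  forall x, -1 < x < 1 -> derivable_pt_lim (Fint Y) x (/ Xc Y x).
Proof.
  intros Hc Hn x Hx.
  apply is_derive_Reals.
  apply (is_derive_RInt (fun u => / Xc Y u) (Fint Y) 0 x).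
  - apply (locally_interval _ x (-1) 1); simpl; try lra.
    intros y Hy1 Hy2. unfold Fint. apply (@RInt_correct R_CompleteNormedModule).
    apply (@ex_RInt_continuous R_CompleteNormedModule). intros z Hz.
    apply continuity_pt_filterlim.
    assert (-1 < z < 1).
    { split; [apply Rlt_le_trans with (Rmin 0 y) | apply Rle_lt_trans with (Rmax 0 y)];
      try tauto; unfold Rmin, Rmax; destruct Rle_dec; lra. }
    exact (continuity_pt_inv _ _ (Xc_cont Y Hc z H) (Xc_nz Y Hn z ltac:(lra))).
  - apply continuity_pt_filterlim.
    exact (continuity_pt_inv _ _ (Xc_cont Y Hc x Hx) (Xc_nz Y Hn x ltac:(lra))).
Qed.

Lemma cont_ind (P : R -> Prop) a b : a < b -> P a ->
  (forall t, a <= t < b -> P t -> exists d, d > 0 /\ forall s, t <= s < t + d -> s < b -> P s) ->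
  (forall t, a < t < b -> (forall s, a <= s < t -> P s) -> P t) ->
  forall t, a <= t < b -> P t.
Proof.
  intros Hab Pa Hstep Hcl t0 Ht0.
  apply NNPP; intro Hn.
  set (E := fun u => a <= u <= t0 /\ forall s, a <= s <= u -> P s).
  assert (HE : exists x, E x).
  { exists a. split; [lra|]. intros s Hs. replace s with a by lra. exact Pa. }
  assert (HB : bound E). { exists t0. intros u [Hu _]. lra. }
  destruct (completeness E HB HE) as [m [Hub Hlub]].
  assert (Ham : a <= m) by (apply Hub; destruct HE as [x Hx]; split; [lra|];
    intros s Hs; replace s with a by lra; exact Pa).
  assert (Hmt : m <= t0) by (apply Hlub; intros u [Hu _]; lra).
  assert (Hbelow : forall s, a <= s < m -> P s).
  { intros s Hs. apply NNPP; intro Hns.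
    assert (m <= s); [|lra]. apply Hlub. intros u [Hu1 Hu2].
    destruct (Rle_dec u s) as [|Hus]; [lra|]. exfalso; apply Hns; apply Hu2; lra. }
  assert (Pm : P m).
  { destruct (Req_dec m a) as [->|Hma]; [exact Pa|]. apply Hcl; [lra|exact Hbelow]. }
  destruct (Hstep m ltac:(lra) Pm) as [d [Hd Hd']].
  destruct (Rlt_dec t0 (m + d)) as [Hlt|Hge].
  - apply Hn. apply Hd'; lra.
  - assert (E (m + d/2)).
    { split; [lra|]. intros s Hs. destruct (Rlt_dec s m); [apply Hbelow; lra|].
      apply Hd'; lra. }
    assert (m + d/2 <= m) by (apply Hub; assumption). lra.
Qed.

Lemma const_rd (psi : R -> R) a b : a < b ->
  (forall s, a <= s < b -> right_deriv psi s b 0) ->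
  (forall s, a < s < b -> forall eps, eps > 0 -> exists d, d > 0 /\
      forall u, a <= u < s -> s - u < d -> Rabs (psi u - psi s) < eps) ->
  forall s, a <= s < b -> psi s = psi a.
Proof.
  intros Hab Hd Hc.
  assert (Key : forall e, e > 0 -> forall t, a <= t < b -> Rabs (psi t - psi a) <= e * (t - a)).
  { intros e He. apply cont_ind; auto.
    - unfold Rminus; rewrite Rplus_opp_r, Rabs_R0; lra.
    - intros t Ht Pt. destruct (Hd t Ht e He) as [d [Hd0 Hd1]].
      exists d; split; auto. intros s Hs Hsb.
      destruct (Req_dec s t) as [->|Hst]; [auto|].
      assert (Hq := Hd1 s ltac:(lra) ltac:(lra) Hsb).
      rewrite Rminus_0_r in Hq.
      unfold Rdiv in Hq. rewrite Rabs_mult, Rabs_inv in Hq.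
      rewrite (Rabs_right (s - t)) in Hq by lra.
      assert (Rabs (psi s - psi t) < e * (s - t)).
      { apply (Rmult_lt_reg_r (/ (s - t))). apply Rinv_0_lt_compat; lra.
        rewrite Rmult_assoc, Rinv_r by lra. lra. }
      replace (psi s - psi a) with ((psi s - psi t) + (psi t - psi a)) by ring.
      eapply Rle_trans; [apply Rabs_triang|]. lra.
    - intros t Ht Hbel. apply Rnot_lt_le; intro Hgt.
      set (gap := Rabs (psi t - psi a) - e * (t - a)).
      destruct (Hc t Ht (gap / 2) ltac:(unfold gap; lra)) as [d [Hd0 Hd1]].
      set (u := Rmax a (t - d / 2)).
      assert (Hu1 : a <= u) by apply Rmax_l.
      assert (Hu2 : t - d/2 <= u) by apply Rmax_r.
      assert (Hu3 : u < t) by (unfold u, Rmax; destruct Rle_dec; lra).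
      assert (H1 := Hd1 u ltac:(lra) ltac:(lra)).
      assert (H2 := Hbel u ltac:(lra)).
      replace (psi t - psi a) with (-(psi u - psi t) + (psi u - psi a)) in Hgt by ring.
      assert (H3 := Rabs_triang (-(psi u - psi t)) (psi u - psi a)).
      rewrite Rabs_Ropp in H3. unfold gap in H1.
      replace (psi t - psi a) with (-(psi u - psi t) + (psi u - psi a)) in H1 by ring.
      assert (e * (u - a) <= e * (t - a)) by (apply Rmult_le_compat_l; lra).
      lra. }
  intros s Hs. apply NNPP; intro Hne.
  assert (HD : Rabs (psi s - psi a) > 0) by (apply Rabs_pos_lt; intro; apply Hne; lra).
  set (e := Rabs (psi s - psi a) / (2 * (s - a + 1))).
  assert (He : e > 0) by (unfold e; apply Rdiv_lt_0_compat; lra).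
  assert (H := Key e He s Hs).
  assert (e * (s - a) < Rabs (psi s - psi a)); [|lra].
  unfold e. apply (Rmult_lt_reg_r (2 * (s - a + 1))); [lra|].
  unfold Rdiv. field_simplify; [|lra]. nra.
Qed.

Section MV.
Variables (F f' : R -> R) (lo hi : R).
Hypothesis HD : forall x, lo < x < hi -> derivable_pt_lim F x (f' x).

Lemma MVT_both a b : lo < a < hi -> lo < b < hi ->
  exists xi, Rabs (xi - a) <= Rabs (b - a) /\ lo < xi < hi /\ F b - F a = f' xi * (b - a)
    /\ Rmin a b <= xi <= Rmax a b.
Proof.
  intros Ha Hb. destruct (Rtotal_order a b) as [Hlt|[Heq|Hgt]].
  - destruct (MVT_cor2 F f' a b Hlt) as [c [Hc1 Hc2]].
    { intros c Hc; apply HD; lra. }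
    exists c. split; [unfold Rabs; repeat destruct Rcase_abs; lra|]. split; [lra|split; [exact Hc1|]].
    unfold Rmin, Rmax; destruct Rle_dec; lra.
  - subst. exists b. split; [unfold Rabs; repeat destruct Rcase_abs; lra|]. split; [lra|split; [ring|]].
    unfold Rmin, Rmax; destruct Rle_dec; lra.
  - destruct (MVT_cor2 F f' b a Hgt) as [c [Hc1 Hc2]].
    { intros c Hc; apply HD; lra. }
    exists c. split; [unfold Rabs; repeat destruct Rcase_abs; lra|]. split; [lra|].
    split; [replace (F b - F a) with (- (F a - F b)) by ring; rewrite Hc1; ring|].
    unfold Rmin, Rmax; destruct Rle_dec; lra.
Qed.

Lemma F_inj a b : (forall x, lo < x < hi -> f' x <> 0) -> lo < a < hi -> lo < b < hi ->
  F a = F b -> a = b.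
Proof.
  intros Hnz Ha Hb Heq. destruct (MVT_both a b Ha Hb) as [xi [_ [Hxi [Hm _]]]].
  rewrite Heq in Hm. replace (F b - F b) with 0 in Hm by ring.
  symmetry in Hm. apply Rmult_integral in Hm. destruct Hm as [Hm|Hm].
  - exfalso; exact (Hnz xi Hxi Hm).
  - lra.
Qed.

Lemma chain_rd (c : R -> R) t T L :
  lo < c t < hi ->
  (forall s, t < s < T -> lo < c s < hi) ->
  continuity_pt f' (c t) ->
  right_deriv c t T L -> f' (c t) * L = 1 ->
  right_deriv (fun s => F (c s) - s) t T 0.
Proof.
  intros Hct Hcs Hcont Hrd HL eps Heps.
  set (x := c t) in *.
  set (e1 := eps / (2 * (Rabs L + 1))).
  assert (He1 : e1 > 0) by (unfold e1; apply Rdiv_lt_0_compat; [lra|]; 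
    assert (0 <= Rabs L) by apply Rabs_pos; lra).
  unfold continuity_pt, continue_in, limit1_in, limit_in in Hcont; simpl in Hcont;
  unfold R_dist in Hcont.
  destruct (Hcont e1 He1) as [eta [Heta Heta']].
  set (e2 := Rmin 1 (eps / (2 * (Rabs (f' x) + 1)))).
  assert (He2 : e2 > 0).
  { unfold e2. apply Rmin_pos; [lra|]. apply Rdiv_lt_0_compat; [lra|].
    assert (0 <= Rabs (f' x)) by apply Rabs_pos; lra. }
  destruct (Hrd e2 He2) as [d1 [Hd1 Hd1']].
  assert (HLp : 0 <= Rabs L) by apply Rabs_pos.
  exists (Rmin d1 (eta / (Rabs L + 1))). split.
  { apply Rmin_pos; [lra|apply Rdiv_lt_0_compat; lra]. }
  intros s Hts Hsd HsT.
  assert (Hm1 := Rmin_l d1 (eta / (Rabs L + 1))).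
  assert (Hm2 := Rmin_r d1 (eta / (Rabs L + 1))).
  assert (Hq := Hd1' s Hts ltac:(lra) HsT).
  set (q := (c s - c t) / (s - t)) in *.
  assert (Hcsq : c s - c t = q * (s - t)) by (unfold q; field; lra).
  assert (He2a := Rmin_l 1 (eps / (2 * (Rabs (f' x) + 1)))).
  assert (He2b := Rmin_r 1 (eps / (2 * (Rabs (f' x) + 1)))).
  fold e2 in He2a, He2b.
  assert (Hqb : Rabs q < Rabs L + 1).
  { replace q with ((q - L) + L) by ring. eapply Rle_lt_trans; [apply Rabs_triang|]. lra. }
  assert (Hcs' : Rabs (c s - x) < eta).
  { unfold x. rewrite Hcsq, Rabs_mult, (Rabs_right (s - t)) by lra.
    assert (s - t < eta / (Rabs L + 1)) by lra.
    assert (Hq0 : 0 <= Rabs q) by apply Rabs_pos.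
    apply Rle_lt_trans with ((Rabs L + 1) * (s - t)).
    - apply Rmult_le_compat_r; lra.
    - apply (Rmult_lt_reg_r (/ (Rabs L + 1))); [apply Rinv_0_lt_compat; lra|].
      replace ((Rabs L + 1) * (s - t) * / (Rabs L + 1)) with (s - t) by (field; lra).
      exact H. }
  destruct (MVT_both x (c s) Hct (Hcs s ltac:(lra))) as [xi [Hxi1 [Hxi2 [Hxi3 _]]]].
  assert (Hfx : Rabs (f' xi - f' x) < e1).
  { destruct (Req_dec xi x) as [->|Hne].
    - unfold Rminus; rewrite Rplus_opp_r, Rabs_R0; lra.
    - apply Heta'. split; [split; [exact I|auto]|]. lra. }
  replace ((F (c s) - s - (F x - t)) / (s - t) - 0) with (f' xi * q - 1).
  2:{ replace (F (c s) - s - (F x - t)) with ((F (c s) - F x) - (s - t)) by ring.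
      rewrite Hxi3. unfold x. rewrite Hcsq. field. lra. }
  replace (f' xi * q - 1) with ((f' xi - f' x) * q + f' x * (q - L)) by (rewrite <- HL; ring).
  eapply Rle_lt_trans; [apply Rabs_triang|]. rewrite (Rabs_mult (f' xi - f' x)), (Rabs_mult (f' x)).
  assert (A1 : Rabs (f' xi - f' x) * Rabs q <= e1 * (Rabs L + 1)).
  { apply Rmult_le_compat; try apply Rabs_pos; lra. }
  assert (A2 : Rabs (f' x) * Rabs (q - L) <= Rabs (f' x) * (eps / (2 * (Rabs (f' x) + 1)))).
  { apply Rmult_le_compat_l; [apply Rabs_pos|lra]. }
  assert (A3 : e1 * (Rabs L + 1) = eps / 2) by (unfold e1; field; lra).
  assert (A4 : Rabs (f' x) * (eps / (2 * (Rabs (f' x) + 1))) < eps / 2).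
  { assert (0 <= Rabs (f' x)) by apply Rabs_pos.
    apply (Rmult_lt_reg_r (2 * (Rabs (f' x) + 1))); [lra|].
    unfold Rdiv. field_simplify; [|lra]. nra. }
  assert (Rabs (f' xi - f' x) * Rabs q < e1 * (Rabs L + 1) \/ 
          Rabs (f' xi - f' x) * Rabs q = e1 * (Rabs L + 1)) by lra.
  lra.
Qed.
End MV.

Ltac rabs := unfold Rabs in *; repeat destruct Rcase_abs; lra.

Lemma sd_sym p q : star_dist p q = star_dist q p.
Proof.
  destruct p as [a x], q as [b y]; unfold star_dist; simpl.
  rewrite Nat.eqb_sym. destruct (Nat.eqb b a); [rabs|ring].
Qed.

Lemma sd_nonneg p q : 0 <= snd p -> 0 <= snd q -> 0 <= star_dist p q.
Proof.
  destruct p as [a x], q as [b y]; unfold star_dist; simpl; intros.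
  destruct (Nat.eqb a b); [apply Rabs_pos|lra].
Qed.

Lemma sd_triang p q r : 0 <= snd p -> 0 <= snd q -> 0 <= snd r ->
  star_dist p r <= star_dist p q + star_dist q r.
Proof.
  destruct p as [a x], q as [b y], r as [c z]; unfold star_dist; simpl; intros.
  destruct (Nat.eqb a b) eqn:E1; destruct (Nat.eqb b c) eqn:E2; destruct (Nat.eqb a c) eqn:E3;
  rewrite ?Nat.eqb_eq, ?Nat.eqb_neq in *; try (exfalso; lia); rabs.
Qed.

Lemma sd_eq0 p q : 0 <= snd p -> 0 <= snd q -> star_dist p q = 0 -> star_eq p q.
Proof.
  destruct p as [a x], q as [b y]; unfold star_dist, star_eq; simpl; intros.
  destruct (Nat.eqb a b) eqn:E1; rewrite ?Nat.eqb_eq, ?Nat.eqb_neq in *.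
  - left. subst. f_equal. unfold Rabs in *; destruct Rcase_abs; lra.
  - right; lra.
Qed.

Lemma seq_sd0 p q : star_eq p q -> star_dist p q = 0.
Proof.
  destruct p as [a x], q as [b y]; unfold star_dist, star_eq; simpl; intros [H|[H1 H2]].
  - inversion H; subst. rewrite Nat.eqb_refl. unfold Rminus; rewrite Rplus_opp_r; apply Rabs_R0.
  - subst. destruct (Nat.eqb a b); [unfold Rminus; rewrite Rplus_opp_r; apply Rabs_R0|ring].
Qed.

Lemma coord_lip e p q : 0 <= snd p -> 0 <= snd q -> on_edge e p -> on_edge e q ->
  Rabs (coord e p - coord e q) <= star_dist p q.
Proof.
  destruct p as [a x], q as [b y]; unfold star_dist, coord, on_edge; simpl; intros Hx Hy Hp Hq.
  destruct (Nat.eqb a b) eqn:E1; destruct (Nat.eqb a e) eqn:E2; destruct (Nat.eqb b e) eqn:E3;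
  rewrite ?Nat.eqb_eq, ?Nat.eqb_neq in *; try (exfalso; lia);
  destruct Hp; destruct Hq; try (exfalso; lia); subst; rabs.
Qed.

Lemma coord_eq e p q : star_eq p q -> coord e p = coord e q.
Proof.
  destruct p as [a x], q as [b y]; unfold star_eq, coord; simpl; intros [H|[H1 H2]].
  - inversion H; subst; reflexivity.
  - subst. destruct (Nat.eqb a e), (Nat.eqb b e); reflexivity.
Qed.

Lemma coord_range e p : 0 <= snd p < 1 -> 0 <= coord e p < 1.
Proof.
  destruct p as [a x]; unfold coord; simpl; intros H. destruct (Nat.eqb a e); lra.
Qed.

Lemma edge_eq e p q : on_edge e p -> on_edge e q -> coord e p = coord e q -> star_eq p q.
Proof.
  destruct p as [a x], q as [b y]; unfold star_eq, coord, on_edge; simpl; intros Hp Hq H.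
  destruct (Nat.eqb a e) eqn:E2; destruct (Nat.eqb b e) eqn:E3;
  rewrite ?Nat.eqb_eq, ?Nat.eqb_neq in *; subst.
  - left; reflexivity.
  - destruct Hq; [lia|]. right; lra.
  - destruct Hp; [lia|]. right; lra.
  - destruct Hp; [lia|]. destruct Hq; [lia|]. right; lra.
Qed.

Lemma coord_vertex e p : snd p = 0 -> coord e p = 0.
Proof. destruct p as [a x]; unfold coord; simpl; intros; destruct (Nat.eqb a e); auto. Qed.

Lemma coord_self e x : coord e (e, x) = x.
Proof. unfold coord; simpl; rewrite Nat.eqb_refl; auto. Qed.

Lemma on_edge_interior e p : on_edge e p -> snd p <> 0 -> fst p = e.
Proof. unfold on_edge; intros [H|H] Hn; tauto. Qed.

Lemma two_edges i e p : on_edge i p -> on_edge e p -> i <> e -> snd p = 0.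
Proof. unfold on_edge; intros [H|H] [H'|H'] Hn; auto; exfalso; apply Hn; congruence. Qed.

Lemma restrict K X g T T' : star_solution K X g T -> 0 < T' <= T -> star_solution K X g T'.
Proof.
  intros [HT [Hp [Hc Hd]]] HT'. split; [lra|]. split; [intros; apply Hp; lra|]. split.
  - intros t Ht eps He. destruct (Hc t ltac:(lra) eps He) as [d [Hd0 Hd1]].
    exists d; split; auto. intros s Hs Hst. apply Hd1; lra.
  - intros t Ht. destruct (Hd t ltac:(lra)) as [i [Hi [[d [Hd0 Hd1]] Hr]]].
    exists i; split; auto. split.
    + exists d; split; auto. intros s H1 H2 H3; apply Hd1; lra.
    + intros eps He. destruct (Hr eps He) as [d' [Hd'0 Hd'1]]. exists d'; split; auto.
      intros s H1 H2 H3; apply Hd'1; lra.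
Qed.

Lemma rd_restrict f t T T' L : right_deriv f t T L -> T' <= T -> right_deriv f t T' L.
Proof.
  intros H HT eps He. destruct (H eps He) as [d [Hd Hd']]. exists d; split; auto.
  intros; apply Hd'; lra.
Qed.

Lemma rd_ext f h t T L : (forall s, f s = h s) -> right_deriv f t T L -> right_deriv h t T L.
Proof.
  intros E H eps He. destruct (H eps He) as [d [Hd Hd']]. exists d; split; auto.
  intros; rewrite <- !E; apply Hd'; lra.
Qed.

Lemma rd_zero_const f t T L : t < T -> right_deriv f t T L ->
  (exists eta, eta > 0 /\ forall s, t < s < t + eta -> s < T -> f s = f t) -> L = 0.
Proof.
  intros HT H [eta [He He']]. apply NNPP; intro HL.
  assert (HL' : Rabs L > 0) by (apply Rabs_pos_lt; auto).
  destruct (H (Rabs L) HL') as [d [Hd Hd']].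
  set (m := Rmin d (Rmin eta (T - t))).
  assert (Hm1 := Rmin_l d (Rmin eta (T - t))).
  assert (Hm2 := Rmin_l eta (T - t)). assert (Hm3 := Rmin_r eta (T - t)).
  assert (Hm4 : m > 0) by (unfold m; repeat apply Rmin_pos; lra).
  fold m in Hm1.
  assert (Hm5 : m <= Rmin eta (T - t)) by (unfold m; apply Rmin_r).
  assert (Hs := Hd' (t + m/2) ltac:(lra) ltac:(lra) ltac:(lra)).
  rewrite (He' (t + m/2) ltac:(lra) ltac:(lra)) in Hs.
  replace ((f t - f t) / (t + m / 2 - t) - L) with (- L) in Hs by (field; lra).
  rewrite Rabs_Ropp in Hs. lra.
Qed.

Lemma rd_nonneg f t T L : t < T -> right_deriv f t T L ->
  (forall s, t < s < T -> f t <= f s) -> 0 <= L.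
Proof.
  intros HT H Hm. apply Rnot_lt_le; intro HL.
  destruct (H (- L) ltac:(lra)) as [d [Hd Hd']].
  set (m := Rmin d (T - t)).
  assert (Hm1 := Rmin_l d (T - t)). assert (Hm2 := Rmin_r d (T - t)).
  assert (Hm4 : m > 0) by (unfold m; apply Rmin_pos; lra).
  fold m in Hm1, Hm2.
  assert (Hs := Hd' (t + m/2) ltac:(lra) ltac:(lra) ltac:(lra)).
  assert (Hq : 0 <= (f (t + m / 2) - f t) / (t + m / 2 - t)).
  { apply Rdiv_le_0_compat; [|lra]. assert (H0 := Hm (t + m/2) ltac:(lra)). lra. }
  unfold Rabs in Hs; destruct Rcase_abs in Hs; lra.
Qed.

Section Sol.
Variables (K : nat) (X : nat -> R -> R).
Hypothesis Hns : forall i, (i < K)%nat -> nonsingular (X i).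

Lemma vertex_edge g T t i : star_solution K X g T -> 0 <= t < T -> snd (g t) = 0 -> (i < K)%nat ->
  right_deriv (fun s => coord i (g s)) t T (X i (coord i (g t))) -> X i 0 > 0.
Proof.
  intros [HT [Hp _]] Ht Hv Hi Hr.
  rewrite (coord_vertex i _ Hv) in Hr.
  assert (0 <= X i 0).
  { apply (rd_nonneg (fun s => coord i (g s)) t T); [lra|exact Hr|].
    intros s Hs. rewrite (coord_vertex i _ Hv).
    destruct (Hp s ltac:(lra)) as [_ Hs'].
    apply (coord_range i _ Hs'). }
  assert (X i 0 <> 0) by (apply Hns; [auto|lra]). lra.
Qed.

Lemma edge_stable g T e t d : star_solution K X g T -> (e < K)%nat -> d > 0 ->
  (forall s, t <= s < t + d -> s < T -> on_edge e (g s)) ->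
  forall s, 0 <= t -> t <= s < t + d -> s < T ->
  right_deriv (fun u => coord e (g u)) s T (X e (coord e (g s))).
Proof.
  intros Hsol He Hd Hon s Ht0 Hs HsT.
  destruct Hsol as [HT [Hp [Hc Hder]]].
  destruct (Hder s ltac:(lra)) as [i [Hi [[ds [Hds Hds']] Hr]]].
  destruct (Nat.eq_dec i e) as [<-|Hne]; [exact Hr|].
  exfalso.
  assert (Hv : forall u, s <= u < s + Rmin ds (t + d - s) -> u < T -> snd (g u) = 0).
  { intros u Hu HuT. assert (Hm1 := Rmin_l ds (t + d - s)). assert (Hm2 := Rmin_r ds (t + d - s)).
    apply (two_edges i e); [apply Hds'|apply Hon|]; auto; lra. }
  assert (Hmp : Rmin ds (t + d - s) > 0) by (apply Rmin_pos; lra).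
  assert (Hvs : snd (g s) = 0) by (apply Hv; [lra|exact HsT]).
  rewrite (coord_vertex i _ Hvs) in Hr.
  assert (X i 0 = 0).
  { apply (rd_zero_const (fun u => coord i (g u)) s T); [lra|exact Hr|].
    exists (Rmin ds (t + d - s)). split; [apply Rmin_pos; lra|].
    intros u Hu HuT. rewrite (coord_vertex i _ (Hv u ltac:(lra) HuT)).
    rewrite (coord_vertex i _ Hvs). reflexivity. }
  revert H. apply Hns; [auto|lra].
Qed.
End Sol.

Section Loc.
Variables (K : nat) (X : nat -> R -> R).
Hypothesis Hvf : forall i, (i < K)%nat -> vf_continuous (X i).
Hypothesis Hns : forall i, (i < K)%nat -> nonsingular (X i).

Lemma Fcont e x : (e < K)%nat -> -1 < x < 1 -> continuity_pt (Fint (X e)) x.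
Proof.
  intros He Hx. apply derivable_continuous_pt.
  exact (exist _ _ (Fint_deriv (X e) (Hvf e He) (Hns e He) x Hx)).
Qed.

Lemma psi_const g T e t d : star_solution K X g T -> (e < K)%nat -> d > 0 -> 0 <= t < T ->
  (forall s, t <= s < t + d -> s < T -> on_edge e (g s)) ->
  forall s, t <= s < Rmin (t + d) T ->
  Fint (X e) (coord e (g s)) - s = Fint (X e) (coord e (g t)) - t.
Proof.
  intros Hsol He Hd Ht Hon.
  assert (Hb1 := Rmin_l (t + d) T). assert (Hb2 := Rmin_r (t + d) T).
  assert (Htb : t < Rmin (t + d) T) by (unfold Rmin; destruct Rle_dec; lra).
  assert (Hrange : forall s, 0 <= s < T -> -1 < coord e (g s) < 1).
  { intros s Hs. destruct Hsol as [_ [Hp _]]. destruct (Hp s Hs) as [_ Hs'].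
    assert (H := coord_range e _ Hs'). lra. }
  assert (Hrange0 : forall s, 0 <= s < T -> 0 <= coord e (g s)).
  { intros s Hs. destruct Hsol as [_ [Hp _]]. destruct (Hp s Hs) as [_ Hs'].
    apply (coord_range e _ Hs'). }
  apply (const_rd (fun s => Fint (X e) (coord e (g s)) - s) t (Rmin (t + d) T) Htb).
  - intros s Hs.
    apply (chain_rd (Fint (X e)) (fun u => / Xc (X e) u) (-1) 1
             (Fint_deriv (X e) (Hvf e He) (Hns e He)) (fun u => coord e (g u)) s _
             (X e (coord e (g s)))).
    + apply Hrange; lra.
    + intros s' Hs'; apply Hrange; lra.
    + assert (Hr := Hrange s ltac:(lra)).
      assert (Hr' : coord e (g s) < 1) by lra.
      exact (continuity_pt_inv _ _ (Xc_cont _ (Hvf e He) _ Hr) (Xc_nz _ (Hns e He) _ Hr')).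
    + apply (rd_restrict _ _ T); [|lra].
      apply (edge_stable K X Hns g T e t d Hsol He Hd Hon s); lra.
    + unfold Xc. rewrite Rmax_right by (apply Hrange0; lra). field.
      apply (Hns e He). assert (H:=Hrange s ltac:(lra)). assert (H0:=Hrange0 s ltac:(lra)). lra.
  - intros s Hs eps Heps.
    assert (Hcs := Hrange s ltac:(lra)).
    assert (HF := Fcont e _ He Hcs).
    unfold continuity_pt, continue_in, limit1_in, limit_in in HF; simpl in HF; unfold R_dist in HF.
    destruct (HF (eps / 2) ltac:(lra)) as [eta [Heta Heta']].
    destruct Hsol as [HT [Hp [Hc Hder]]].
    destruct (Hc s ltac:(lra) eta Heta) as [d1 [Hd1 Hd1']].
    exists (Rmin d1 (eps / 2)). split; [apply Rmin_pos; lra|].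
    intros u Hu Hsu.
    assert (Hm1 := Rmin_l d1 (eps / 2)). assert (Hm2 := Rmin_r d1 (eps / 2)).
    assert (Hdist : star_dist (g u) (g s) < eta).
    { apply Hd1'; [lra|]. rewrite Rabs_left by lra. lra. }
    assert (Hcl : Rabs (coord e (g u) - coord e (g s)) < eta).
    { eapply Rle_lt_trans; [|exact Hdist]. apply coord_lip.
      - destruct (Hp u ltac:(lra)) as [_ ?]; lra.
      - destruct (Hp s ltac:(lra)) as [_ ?]; lra.
      - apply Hon; lra.
      - apply Hon; lra. }
    assert (HFd : Rabs (Fint (X e) (coord e (g u)) - Fint (X e) (coord e (g s))) < eps / 2).
    { destruct (Req_dec (coord e (g u)) (coord e (g s))) as [Heq|Hne].
      - rewrite Heq. unfold Rminus; rewrite Rplus_opp_r, Rabs_R0; lra.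
      - apply Heta'. split; [split; [exact I|auto]|exact Hcl]. }
    replace (Fint (X e) (coord e (g u)) - u - (Fint (X e) (coord e (g s)) - s))
      with ((Fint (X e) (coord e (g u)) - Fint (X e) (coord e (g s))) + (s - u)) by ring.
    eapply Rle_lt_trans; [apply Rabs_triang|]. rewrite (Rabs_right (s - u)) by lra. lra.
Qed.

Hypothesis H3 : exists i, ((i < K)%nat /\ X i 0 > 0) /\
          forall j, (j < K)%nat -> X j 0 > 0 -> j = i.

Lemma local_uniq g1 g2 T t : star_solution K X g1 T -> star_solution K X g2 T -> 0 <= t < T ->
  star_eq (g1 t) (g2 t) -> exists d, d > 0 /\ forall s, t <= s < t + d -> s < T -> star_eq (g1 s) (g2 s).
Proof.
  intros Hs1 Hs2 Ht Heq.
  destruct Hs1 as [HT1 [Hp1 [Hc1 Hder1]]] eqn:E1.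
  destruct Hs2 as [HT2 [Hp2 [Hc2 Hder2]]] eqn:E2.
  destruct (Hder1 t Ht) as [e1 [He1 [[d1 [Hd1 Hon1]] Hr1]]].
  destruct (Hder2 t Ht) as [e2 [He2 [[d2 [Hd2 Hon2]] Hr2]]].
  assert (Hee : e1 = e2).
  { destruct (Req_dec (snd (g1 t)) 0) as [Hv|Hnv].
    - assert (Hv2 : snd (g2 t) = 0) by (destruct Heq as [<-|[_ ?]]; auto).
      assert (P1 := vertex_edge K X Hns g1 T t e1 Hs1 Ht Hv He1 Hr1).
      assert (P2 := vertex_edge K X Hns g2 T t e2 Hs2 Ht Hv2 He2 Hr2).
      destruct H3 as [i [_ Hu]]. rewrite (Hu e1 He1 P1), (Hu e2 He2 P2). reflexivity.
    - destruct Heq as [Heq|[? _]]; [|contradiction].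
      assert (F1 := on_edge_interior e1 _ (Hon1 t ltac:(lra) ltac:(lra) ltac:(lra)) Hnv).
      rewrite Heq in Hnv.
      assert (F2 := on_edge_interior e2 _ (Hon2 t ltac:(lra) ltac:(lra) ltac:(lra)) Hnv).
      rewrite Heq in F1. congruence. }
  subst e2. clear E1 E2.
  set (d := Rmin d1 d2).
  assert (Hm1 := Rmin_l d1 d2). assert (Hm2 := Rmin_r d1 d2). fold d in Hm1, Hm2.
  assert (Hd : d > 0) by (unfold d; apply Rmin_pos; lra).
  exists d. split; [exact Hd|]. intros s Hs HsT.
  assert (On1 : forall s, t <= s < t + d -> s < T -> on_edge e1 (g1 s)).
  { intros u Hu HuT. apply Hon1; lra. }
  assert (On2 : forall s, t <= s < t + d -> s < T -> on_edge e1 (g2 s)).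
  { intros u Hu HuT. apply Hon2; lra. }
  assert (Hsb : t <= s < Rmin (t + d) T) by (unfold Rmin; destruct Rle_dec; lra).
  assert (C1 := psi_const g1 T e1 t d Hs1 He1 Hd Ht On1 s Hsb).
  assert (C2 := psi_const g2 T e1 t d Hs2 He1 Hd Ht On2 s Hsb).
  rewrite (coord_eq e1 _ _ Heq) in C1.
  assert (Hrange : forall g, star_solution K X g T -> forall s, 0 <= s < T -> -1 < coord e1 (g s) < 1).
  { intros g [_ [Hp _]] u Hu. destruct (Hp u Hu) as [_ Hs'].
    assert (H := coord_range e1 _ Hs'). lra. }
  apply (edge_eq e1); [apply On1; lra|apply On2; lra|].
  apply (F_inj (Fint (X e1)) (fun u => / Xc (X e1) u) (-1) 1
           (Fint_deriv (X e1) (Hvf e1 He1) (Hns e1 He1))).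
  - intros x Hx. apply Rinv_neq_0_compat. apply (Xc_nz _ (Hns e1 He1)). lra.
  - apply (Hrange g1 Hs1); lra.
  - apply (Hrange g2 Hs2); lra.
  - lra.
Qed.

Lemma global_uniq g1 T1 g2 T2 : star_solution K X g1 T1 -> star_solution K X g2 T2 ->
  star_eq (g1 0) (g2 0) -> forall t, 0 <= t -> t < T1 -> t < T2 -> star_eq (g1 t) (g2 t).
Proof.
  intros S1 S2 H0 t Ht0 Ht1 Ht2.
  set (T := Rmin T1 T2).
  assert (HT1 := Rmin_l T1 T2). assert (HT2 := Rmin_r T1 T2). fold T in HT1, HT2.
  assert (HTp : T > 0) by (unfold T; apply Rmin_pos; destruct S1, S2; lra).
  assert (R1 := restrict K X g1 T1 T S1 ltac:(lra)).
  assert (R2 := restrict K X g2 T2 T S2 ltac:(lra)).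
  assert (HtT : t < T) by (unfold T, Rmin; destruct Rle_dec; lra).
  revert t Ht0 Ht1 Ht2 HtT. intros t Ht0 _ _ HtT.
  apply (cont_ind (fun t => star_eq (g1 t) (g2 t)) 0 T HTp H0); [| |lra].
  - intros u Hu Pu. exact (local_uniq g1 g2 T u R1 R2 Hu Pu).
  - intros u Hu Hbel.
    destruct R1 as [_ [Hp1 [Hc1 _]]]. destruct R2 as [_ [Hp2 [Hc2 _]]].
    assert (Hn1 : 0 <= snd (g1 u)) by (destruct (Hp1 u ltac:(lra)); lra).
    assert (Hn2 : 0 <= snd (g2 u)) by (destruct (Hp2 u ltac:(lra)); lra).
    apply sd_eq0; auto.
    apply NNPP; intro Hne.
    assert (HD : star_dist (g1 u) (g2 u) > 0) by (assert (H := sd_nonneg _ _ Hn1 Hn2); lra).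
    set (D := star_dist (g1 u) (g2 u)) in *.
    destruct (Hc1 u ltac:(lra) (D / 3) ltac:(lra)) as [a1 [Ha1 Ha1']].
    destruct (Hc2 u ltac:(lra) (D / 3) ltac:(lra)) as [a2 [Ha2 Ha2']].
    set (v := Rmax 0 (u - Rmin a1 a2 / 2)).
    assert (Hm := Rmin_pos a1 a2 Ha1 Ha2).
    assert (Hv0 : 0 <= v) by apply Rmax_l.
    assert (Hv1 : u - Rmin a1 a2 / 2 <= v) by apply Rmax_r.
    assert (Hv2 : v < u) by (unfold v, Rmax; destruct Rle_dec; lra).
    assert (Hma := Rmin_l a1 a2). assert (Hmb := Rmin_r a1 a2).
    assert (Hav : Rabs (v - u) < Rmin a1 a2) by (rewrite Rabs_left by lra; lra).
    assert (B1 := Ha1' v ltac:(lra) ltac:(lra)).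
    assert (B2 := Ha2' v ltac:(lra) ltac:(lra)).
    assert (B3 := seq_sd0 _ _ (Hbel v ltac:(lra))).
    assert (Hnv1 : 0 <= snd (g1 v)) by (destruct (Hp1 v ltac:(lra)); lra).
    assert (Hnv2 : 0 <= snd (g2 v)) by (destruct (Hp2 v ltac:(lra)); lra).
    assert (T1' := sd_triang (g1 u) (g1 v) (g2 u) Hn1 Hnv1 Hn2).
    assert (T2' := sd_triang (g1 v) (g2 v) (g2 u) Hnv1 Hnv2 Hn2).
    rewrite sd_sym in B1. unfold D in *. lra.
Qed.
End Loc.

Section Ex.
Variables (K : nat) (X : nat -> R -> R).
Hypothesis Hvf : forall i, (i < K)%nat -> vf_continuous (X i).
Hypothesis Hns : forall i, (i < K)%nat -> nonsingular (X i).
Hypothesis H1 : forall i, (i < K)%nat -> local_semiflow_open (X i).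

Lemma interior_exist k x : (k < K)%nat -> 0 < x < 1 ->
  exists g T, star_solution K X g T /\ star_eq (g 0) (k, x).
Proof.
  intros Hk Hx. destruct (H1 k Hk) as [Hex _].
  destruct (Hex x Hx) as [y [T [[HT [Hr [Hc Hd]]] Hy0]]].
  exists (fun t => (k, y t)), T. split.
  - split; [exact HT|]. split.
    + intros t Ht. split; simpl; [exact Hk|]. specialize (Hr t Ht); lra.
    + split.
      * intros t Ht eps He. destruct (Hc t Ht eps He) as [d [Hd0 Hd1]].
        exists d; split; auto. intros s Hs Hst. unfold star_dist; simpl.
        rewrite Nat.eqb_refl. apply Hd1; auto.
      * intros t Ht. exists k. split; [exact Hk|]. split.
        -- exists 1. split; [lra|]. intros; left; reflexivity.
        -- rewrite (coord_self k (y t)). apply (rd_ext y).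
           ++ intros s; rewrite coord_self; reflexivity.
           ++ apply Hd; exact Ht.
  - left. simpl. rewrite Hy0. reflexivity.
Qed.

Hypothesis H3 : exists i, ((i < K)%nat /\ X i 0 > 0) /\
          forall j, (j < K)%nat -> X j 0 > 0 -> j = i.

Lemma vertex_exist : exists g T, star_solution K X g T /\ snd (g 0) = 0.
Proof.
  destruct H3 as [i0 [[Hi0 HX0] _]].
  set (X0 := X i0 0) in *.
  destruct (Hvf i0 Hi0 0 ltac:(lra) (X0 / 2) ltac:(lra)) as [d0 [Hd0 Hd0']].
  set (a := Rmin (d0 / 2) (1 / 2)).
  assert (Ha1 := Rmin_l (d0 / 2) (1 / 2)). assert (Ha2 := Rmin_r (d0 / 2) (1 / 2)).
  fold a in Ha1, Ha2.
  assert (Ha : a > 0) by (unfold a; apply Rmin_pos; lra).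
  assert (HXb : forall u, -a <= u <= a -> X0 / 2 < Xc (X i0) u < 3 * X0 / 2).
  { intros u Hu. unfold Xc.
    assert (Hm : 0 <= Rmax 0 u <= a) by (unfold Rmax; destruct Rle_dec; lra).
    assert (H := Hd0' (Rmax 0 u) ltac:(lra) ltac:(rewrite Rminus_0_r, Rabs_right; lra)).
    fold X0 in H. unfold Rabs in H; destruct Rcase_abs in H; lra. }
  set (F := Fint (X i0)).
  set (f' := fun u => / Xc (X i0) u).
  assert (HD : forall x, -1 < x < 1 -> derivable_pt_lim F x (f' x))
    by exact (Fint_deriv (X i0) (Hvf i0 Hi0) (Hns i0 Hi0)).
  assert (Finc : forall u v, -a <= u -> u < v -> v <= a -> F u < F v).
  { intros u v Hu Huv Hv. destruct (MVT_cor2 F f' u v Huv) as [c [Hc1 Hc2]].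
    { intros c Hc; apply HD; lra. }
    assert (f' c > 0).
    { unfold f'. apply Rinv_0_lt_compat. assert (H := HXb c ltac:(lra)). lra. }
    assert (f' c * (v - u) > 0) by (apply Rmult_lt_0_compat; lra). lra. }
  assert (F0 : F 0 = 0) by (unfold F, Fint; exact (@RInt_point R_CompleteNormedModule 0 _)).
  set (T := F a).
  assert (HT : T > 0) by (unfold T; rewrite <- F0; apply Finc; lra).
  assert (Fm : F (- a) < 0) by (rewrite <- F0; apply Finc; lra).
  assert (Hexi : forall t, 0 <= t < T -> exists x, -a <= x <= a /\ F x = t).
  { intros t Ht.
    destruct (Ranalysis5.IVT_interv (fun x => F x - t) (- a) a) as [z [Hz1 Hz2]].
    - intros x Hx.
      assert (Hc := Fcont K X Hvf Hns i0 x Hi0 ltac:(lra)).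
      assert (Hct : continuity_pt (fct_cte t) x) by (apply continuity_pt_const; intros ? ?; reflexivity).
      exact (continuity_pt_minus _ _ x Hc Hct).
    - lra.
    - simpl; lra.
    - simpl; unfold T in Ht; lra.
    - exists z. split; [lra|]. simpl in Hz2; lra. }
  set (c := fun t => epsilon (inhabits 0) (fun x => -a <= x <= a /\ F x = t)).
  assert (cspec : forall t, 0 <= t < T -> -a <= c t <= a /\ F (c t) = t).
  { intros t Ht. unfold c. apply (epsilon_spec (inhabits 0) (fun x => -a <= x <= a /\ F x = t)).
    apply Hexi; exact Ht. }
  assert (cpos : forall t, 0 <= t < T -> 0 <= c t < a).
  { intros t Ht. destruct (cspec t Ht) as [Hr HF]. split.
    - apply Rnot_lt_le; intro Hlt. assert (F (c t) < F 0) by (apply Finc; lra). lra.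
    - destruct (Rlt_le_dec (c t) a) as [|Hge]; [auto|]. assert (c t = a) by lra.
      unfold T in Ht. rewrite H in HF. lra. }
  assert (Lip : forall s t, 0 <= s < T -> 0 <= t < T -> exists xi,
            Rabs (xi - c t) <= Rabs (c s - c t) /\ -a <= xi <= a /\
            c s - c t = Xc (X i0) xi * (s - t)).
  { intros s t Hs Ht.
    assert (Cs := cspec s Hs). assert (Ct := cspec t Ht).
    assert (Ps := cpos s Hs). assert (Pt := cpos t Ht).
    destruct (MVT_both F f' (-1) 1 HD (c t) (c s) ltac:(lra) ltac:(lra)) as [xi [Hx1 [Hx2 [Hx3 Hx4]]]].
    exists xi. split; [exact Hx1|]. split.
    - unfold Rmin, Rmax in Hx4; destruct Rle_dec in Hx4; lra.
    - assert (Hxb : -a <= xi <= a) by (unfold Rmin, Rmax in Hx4; destruct Rle_dec in Hx4; lra).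
      assert (HXi := HXb xi Hxb).
      destruct Cs as [_ Cs2]. destruct Ct as [_ Ct2]. rewrite Cs2, Ct2 in Hx3.
      rewrite Hx3. unfold f'. field. lra. }
  exists (fun t => (i0, c t)), T. split.
  - split; [exact HT|]. split.
    + intros t Ht. split; simpl; [exact Hi0|]. assert (H := cpos t Ht). lra.
    + split.
      * intros t Ht eps He. exists (eps / (2 * X0)). split; [apply Rdiv_lt_0_compat; lra|].
        intros s Hs Hst. unfold star_dist; simpl. rewrite Nat.eqb_refl.
        destruct (Lip s t Hs Ht) as [xi [_ [Hxi Heq]]]. rewrite Heq, Rabs_mult.
        assert (HXi := HXb xi Hxi). rewrite (Rabs_right (Xc (X i0) xi)) by lra.
        apply Rle_lt_trans with (3 * X0 / 2 * Rabs (s - t)).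
        { apply Rmult_le_compat_r; [apply Rabs_pos|lra]. }
        apply Rlt_le_trans with (3 * X0 / 2 * (eps / (2 * X0))).
        { apply Rmult_lt_compat_l; lra. }
        replace (3 * X0 / 2 * (eps / (2 * X0))) with (3/4 * eps) by (field; lra); lra.
      * intros t Ht. exists i0. split; [exact Hi0|]. split.
        -- exists 1. split; [lra|]. intros; left; reflexivity.
        -- rewrite (coord_self i0 (c t)). apply (rd_ext c).
           { intros s; rewrite coord_self; reflexivity. }
           intros eps He.
           assert (Pt := cpos t Ht).
           assert (HC := Xc_cont (X i0) (Hvf i0 Hi0) (c t) ltac:(lra)).
           unfold continuity_pt, continue_in, limit1_in, limit_in in HC; simpl in HC; unfold R_dist in HC.
           destruct (HC eps He) as [eta [Heta Heta']].
           exists (eta / (2 * X0)). split; [apply Rdiv_lt_0_compat; lra|].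
           intros s Hts Hsd HsT.
           destruct (Lip s t ltac:(lra) Ht) as [xi [Hx1 [Hxi Heq]]].
           replace ((c s - c t) / (s - t)) with (Xc (X i0) xi) by (rewrite Heq; field; lra).
           replace (X i0 (c t)) with (Xc (X i0) (c t)) by (unfold Xc; rewrite Rmax_right; lra).
           destruct (Req_dec xi (c t)) as [->|Hne].
           { unfold Rminus; rewrite Rplus_opp_r, Rabs_R0; lra. }
           apply Heta'. split; [split; [exact I|auto]|].
           assert (HXi := HXb xi Hxi).
           eapply Rle_lt_trans; [exact Hx1|]. rewrite Heq, Rabs_mult.
           rewrite (Rabs_right (Xc (X i0) xi)) by lra. rewrite (Rabs_right (s - t)) by lra.
           apply Rle_lt_trans with (3 * X0 / 2 * (s - t)).
           { apply Rmult_le_compat_r; lra. }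
           apply Rlt_le_trans with (3 * X0 / 2 * (eta / (2 * X0))).
           { apply Rmult_lt_compat_l; lra. }
           replace (3 * X0 / 2 * (eta / (2 * X0))) with (3/4 * eta) by (field; lra); lra.
  - simpl. assert (H0 := cpos 0 ltac:(lra)). assert (C0 := cspec 0 ltac:(lra)).
    destruct (Rle_lt_or_eq_dec 0 (c 0) (proj1 H0)) as [Hlt|Heq]; [|auto].
    exfalso. assert (F 0 < F (c 0)) by (apply Finc; lra). lra.
Qed.
End Ex.

Theorem mainTheorem9 (K : nat) (X : nat -> R -> R)
  (Hvf : forall i, (i < K)%nat -> vf_continuous (X i))
  (Hns : forall i, (i < K)%nat -> nonsingular (X i))
  (H1 : forall i, (i < K)%nat -> local_semiflow_open (X i))
  (H2 : forall i j, (i < K)%nat -> (j < K)%nat -> Rabs (X i 0) = Rabs (X j 0))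
  (H3 : exists i, ((i < K)%nat /\ X i 0 > 0) /\
          forall j, (j < K)%nat -> X j 0 > 0 -> j = i) :
  star_semiflow K X.
Proof.
  split.
  - intros [k x] [Hk Hx]; simpl in *.
    destruct (Req_dec x 0) as [->|Hx0].
    + destruct (vertex_exist K X Hvf Hns H3) as [g [T [Hs Hv]]].
      exists g, T. split; [exact Hs|]. right; simpl; split; auto.
    + apply (interior_exist K X H1 k x Hk). lra.
  - intros g1 T1 g2 T2 S1 S2 H0 t Ht0 Ht1 Ht2.
    exact (global_uniq K X Hvf Hns H3 g1 T1 g2 T2 S1 S2 H0 t Ht0 Ht1 Ht2).
Qed.
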